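(* Let $V$ be an amenable collection of vectors subordinate to a $\mathbb{Q}$-nef partition $E_1,\dots,E_{k+1}$ of a complete fan $\Sigma$ with functions $\varphi_1,\dots,\varphi_{k+1}$. Let $C$ be a minimal cone of $\Sigma$ such that $C\cap M_V$ is $1$-dimensional. Then there is a point $\rho\in C\cap M_V\cap M$ with $\varphi_{k+1}(\rho)=1$.
   Context: $M$ lattice of rank $n$, $N=\mathrm{Hom}(M,\mathbb{Z})$; $\Sigma$ complete fan of strictly convex rational cones in $M_\mathbb{R}$, $\Sigma[1]$ primitive ray generators. $\mathbb{Q}$-nef partition: ordered partition $\Sigma[1]=E_1\sqcup\dots\sqcup E_{k+1}$ with convex functions $\varphi_i(v)=\max_C\langle u_{i,C},v\rangle$ ($u_{i,C}\in N\otimes\mathbb{Q}$, $C$ maximal cones), linear on each cone of $\Sigma$, with $\varphi_i(\rho)=\delta_{ij}$ for $\rho\in E_j$. Amenable collection: $V=\{v_1,\dots,v_k\}\subset N$ with $\langle v_i,\rho\rangle=-1$ on $E_i$, $\ge0$ on $E_j$ for $i<j\le k+1$, $=0$ on $E_j$ for $j<i$. $M_V=\{u\in M_\mathbb{R}:\langle v_i,u\rangle=0\ \forall i\}$. *)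

(* Defs.v *)
From HB Require Import structures.
From mathcomp Require Import all_boot all_order all_algebra.
From mathcomp Require Import reals.
Set Implicit Arguments. Unset Strict Implicit. Unset Printing Implicit Defensive.
Import Order.TTheory GRing.Theory Num.Theory.
Local Open Scope ring_scope.

(* M = Z^n inside M_R = R^n (row vectors); N = Hom(M,Z) is identified with
   Z^n via the dual basis, and N_R with R^n, the pairing being the dot product. *)
Definition pairing (R : realType) (n : nat) (v u : 'rV[R]_n) : R :=
  \sum_(i < n) v ord0 i * u ord0 i.

Definition lattice (R : realType) (n : nat) (u : 'rV[R]_n) : Prop :=
  forall i, u ord0 i \is a Num.int.

Definition rational_vec (R : realType) (n : nat) (u : 'rV[R]_n) : Prop :=
  forall i, exists q : rat, u ord0 i = ratr q.

Definition cone_gen (R : realType) (n : nat) (S : seq 'rV[R]_n) (x : 'rV[R]_n) : Prop :=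
  exists c : 'I_(size S) -> R,
    (forall j, 0 <= c j) /\ x = \sum_(j < size S) c j *: S`_j.

Definition rational_cone (R : realType) (n : nat) (C : 'rV[R]_n -> Prop) : Prop :=
  exists S : seq 'rV[R]_n, (forall j, j \in S -> lattice j) /\
    forall x, C x <-> cone_gen S x.

Definition strictly_convex (R : realType) (n : nat) (C : 'rV[R]_n -> Prop) : Prop :=
  forall x, C x -> C (- x) -> x = 0.

Definition face (R : realType) (n : nat) (F C : 'rV[R]_n -> Prop) : Prop :=
  exists u : 'rV[R]_n, (forall x, C x -> 0 <= pairing u x) /\
    forall x, F x <-> (C x /\ pairing u x = 0).

Definition span_dim (R : realType) (n : nat) (S : 'rV[R]_n -> Prop) (d : nat) : Prop :=
  (exists A : 'M[R]_(d, n), (forall i, S (row i A)) /\ row_free A) /\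
  (forall A : 'M[R]_(d.+1, n), (forall i, S (row i A)) -> ~~ row_free A).

Definition is_fan (R : realType) (n m : nat) (Sigma : 'I_m -> 'rV[R]_n -> Prop) : Prop :=
  [/\ (forall i, rational_cone (Sigma i) /\ strictly_convex (Sigma i)),
      (forall i F, face F (Sigma i) -> exists j, forall x, Sigma j x <-> F x) &
      (forall i j, face (fun x => Sigma i x /\ Sigma j x) (Sigma i) /\
                   face (fun x => Sigma i x /\ Sigma j x) (Sigma j))].

Definition complete_fan (R : realType) (n m : nat) (Sigma : 'I_m -> 'rV[R]_n -> Prop) : Prop :=
  is_fan Sigma /\ forall x, exists i, Sigma i x.

Definition primitive_gen (R : realType) (n : nat) (C : 'rV[R]_n -> Prop) (rho : 'rV[R]_n) : Prop :=
  [/\ C rho, lattice rho, rho != 0 &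
      forall x, C x -> lattice x -> exists k : nat, x = k%:R *: rho].

Definition is_ray (R : realType) (n m : nat) (Sigma : 'I_m -> 'rV[R]_n -> Prop) (rho : 'rV[R]_n) : Prop :=
  exists i, span_dim (Sigma i) 1 /\ primitive_gen (Sigma i) rho.

Definition maximal_cone (R : realType) (n m : nat) (Sigma : 'I_m -> 'rV[R]_n -> Prop) (C : 'I_m) : Prop :=
  forall j, (forall x, Sigma C x -> Sigma j x) -> forall x, Sigma j x -> Sigma C x.

(* Q-nef partition: lab assigns to each ray its block; E_(j+1) = {rho ray | lab rho = j}
   (0-based block indices j : 'I_k.+1); phi i = phi_(i+1), u i C = u_(i+1,C). *)
Definition Qnef_partition (R : realType) (n m k : nat)
  (Sigma : 'I_m -> 'rV[R]_n -> Prop) (lab : 'rV[R]_n -> 'I_k.+1)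
  (phi : 'I_k.+1 -> 'rV[R]_n -> R) (u : 'I_k.+1 -> 'I_m -> 'rV[R]_n) : Prop :=
  [/\ (forall j, exists rho, is_ray Sigma rho /\ lab rho = j),
      (forall i C, maximal_cone Sigma C -> rational_vec (u i C)),
      (forall i x, (exists C, maximal_cone Sigma C /\ phi i x = pairing (u i C) x) /\
                   (forall C, maximal_cone Sigma C -> pairing (u i C) x <= phi i x)),
      (forall i C, exists w : 'rV[R]_n, forall x, Sigma C x -> phi i x = pairing w x) &
      (forall i rho, is_ray Sigma rho -> phi i rho = if lab rho == i then 1 else 0)].

(* amenable collection v_1..v_k (0-based: v i = v_(i+1)) *)
Definition amenable (R : realType) (n m k : nat)
  (Sigma : 'I_m -> 'rV[R]_n -> Prop) (lab : 'rV[R]_n -> 'I_k.+1)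
  (v : 'I_k -> 'rV[R]_n) : Prop :=
  (forall i, lattice (v i)) /\
  forall (i : 'I_k) rho, is_ray Sigma rho ->
    [/\ (nat_of_ord (lab rho) = nat_of_ord i -> pairing (v i) rho = -1),
        ((i < lab rho)%N -> 0 <= pairing (v i) rho) &
        ((lab rho < i)%N -> pairing (v i) rho = 0)].

Definition M_V (R : realType) (n k : nat) (v : 'I_k -> 'rV[R]_n) (x : 'rV[R]_n) : Prop :=
  forall i, pairing (v i) x = 0.

(* Main.v *)
Require Import Defs.
From HB Require Import structures.
From mathcomp Require Import all_boot all_order all_algebra.
From mathcomp Require Import reals.
From mathcomp Require Import ring lra.
From Stdlib Require Import Classical.
From mathcomp Require Import zify.
Import Order.TTheory GRing.Theory Num.Theory.
Local Open Scope ring_scope.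
Set Implicit Arguments. Unset Strict Implicit. Unset Printing Implicit Defensive.
Lemma pairingDl (R : realType) (n : nat) (a b x : 'rV[R]_n) :
  pairing (a + b) x = pairing a x + pairing b x.
Proof. by rewrite /pairing -big_split; apply: eq_bigr => i _; rewrite mxE mulrDl. Qed.
Lemma pairingDr (R : realType) (n : nat) (a b x : 'rV[R]_n) :
  pairing x (a + b) = pairing x a + pairing x b.
Proof. by rewrite /pairing -big_split; apply: eq_bigr => i _; rewrite mxE mulrDr. Qed.
Lemma pairingZl (R : realType) (n : nat) c (a x : 'rV[R]_n) :
  pairing (c *: a) x = c * pairing a x.
Proof. by rewrite /pairing mulr_sumr; apply: eq_bigr => i _; rewrite mxE mulrA. Qed.
Lemma pairingZr (R : realType) (n : nat) c (a x : 'rV[R]_n) :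
  pairing x (c *: a) = c * pairing x a.
Proof. by rewrite /pairing mulr_sumr; apply: eq_bigr => i _; rewrite mxE mulrCA. Qed.
Lemma pairingNl (R : realType) (n : nat) (a x : 'rV[R]_n) :
  pairing (- a) x = - pairing a x.
Proof. by rewrite -scaleN1r pairingZl mulN1r. Qed.
Lemma pairingNr (R : realType) (n : nat) (a x : 'rV[R]_n) :
  pairing x (- a) = - pairing x a.
Proof. by rewrite -scaleN1r pairingZr mulN1r. Qed.
Lemma pairingBl (R : realType) (n : nat) (a b x : 'rV[R]_n) :
  pairing (a - b) x = pairing a x - pairing b x.
Proof. by rewrite pairingDl pairingNl. Qed.
Lemma pairingBr (R : realType) (n : nat) (a b x : 'rV[R]_n) :
  pairing x (a - b) = pairing x a - pairing x b.
Proof. by rewrite pairingDr pairingNr. Qed.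
Lemma pairing0l (R : realType) (n : nat) (x : 'rV[R]_n) : pairing 0 x = 0.
Proof. by rewrite -(scale0r 0) pairingZl mul0r. Qed.
Lemma pairing0r (R : realType) (n : nat) (x : 'rV[R]_n) : pairing x 0 = 0.
Proof. by rewrite -(scale0r 0) pairingZr mul0r. Qed.

Fixpoint incone (R : realType) (n : nat) (L : seq 'rV[R]_n) (x : 'rV[R]_n) : Prop :=
  match L with
  | [::] => x = 0
  | a :: L' => exists c : R, 0 <= c /\ incone L' (x - c *: a)
  end.

Lemma incone0 (R : realType) (n : nat) (L : seq 'rV[R]_n) : incone L 0.
Proof. elim: L => //= a L IH; exists 0; split => //; by rewrite scale0r subr0. Qed.

Lemma inconeD (R : realType) (n : nat) (L : seq 'rV[R]_n) x y :
  incone L x -> incone L y -> incone L (x + y).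
Proof.
elim: L x y => [|a L IH] x y /=; first by move=> -> ->; rewrite addr0.
move=> [c [c0 Hc]] [d [d0 Hd]]; exists (c + d); split; first exact: addr_ge0.
have := IH _ _ Hc Hd; congr incone; by rewrite scalerDl opprD addrACA.
Qed.

Lemma inconeZ (R : realType) (n : nat) (L : seq 'rV[R]_n) l x :
  0 <= l -> incone L x -> incone L (l *: x).
Proof.
move=> l0; elim: L x => [|a L IH] x /=; first by move=> ->; rewrite scaler0.
move=> [c [c0 Hc]]; exists (l * c); split; first exact: mulr_ge0.
by have := IH _ Hc; rewrite scalerBr scalerA.
Qed.

Lemma incone_mem (R : realType) (n : nat) (L : seq 'rV[R]_n) t :
  t \in L -> incone L t.
Proof.
elim: L => [|a L IH] //=; rewrite in_cons => /orP [/eqP ->|tL].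
  by exists 1; split => //; rewrite scale1r subrr; apply: incone0.
by exists 0; split => //; rewrite scale0r subr0; apply: IH.
Qed.

Lemma incone_sub (R : realType) (n : nat) (L T : seq 'rV[R]_n) x :
  (forall t, t \in T -> incone L t) -> incone T x -> incone L x.
Proof.
elim: T x => [|a T IH] x HT /=; first by move=> ->; apply: incone0.
move=> [c [c0 Hc]].
have -> : x = (x - c *: a) + c *: a by rewrite subrK.
apply: inconeD; last by apply: inconeZ => //; apply: HT; rewrite mem_head.
by apply: IH => // t tT; apply: HT; rewrite in_cons tT orbT.
Qed.

Lemma incone_rem (R : realType) (n : nat) (L : seq 'rV[R]_n) s x :
  s \in L -> (incone L x <-> exists c, 0 <= c /\ incone (rem s L) (x - c *: s)).
Proof.
elim: L x => [|a L IH] x //=; rewrite in_cons.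
case: (eqVneq a s) => [<- _|ne]; first by [].
  
rewrite /= => sL; split.
  move=> [c [c0 /(IH _ sL) [d [d0 Hd]]]]; exists d; split => //.
  exists c; split => //; move: Hd; congr incone; by rewrite addrAC.
move=> [d [d0 [c [c0 Hc]]]]; exists c; split => //; apply/(IH _ sL).
exists d; split => //; move: Hc; congr incone; by rewrite addrAC.
Qed.

Lemma pairing_ge0 (R : realType) (n : nat) (T : seq 'rV[R]_n) w x :
  (forall t, t \in T -> 0 <= pairing w t) -> incone T x -> 0 <= pairing w x.
Proof.
elim: T x => [|a T IH] x HT /=; first by move=> ->; rewrite pairing0r.
move=> [c [c0 Hc]].
have -> : x = (x - c *: a) + c *: a by rewrite subrK.
rewrite pairingDr pairingZr; apply: addr_ge0.
  by apply: IH => // t tT; apply: HT; rewrite in_cons tT orbT.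
by apply: mulr_ge0 => //; apply: HT; rewrite mem_head.
Qed.

Lemma pairing_eq0 (R : realType) (n : nat) (T : seq 'rV[R]_n) w x :
  (forall t, t \in T -> pairing w t = 0) -> incone T x -> pairing w x = 0.
Proof.
move=> HT Hx; apply/eqP; rewrite eq_le; apply/andP; split.
  rewrite -oppr_ge0 -pairingNl; apply: (pairing_ge0 _ Hx) => t /HT.
  by rewrite pairingNl => ->; rewrite oppr0.
by apply: (pairing_ge0 _ Hx) => t /HT ->.
Qed.

Lemma pairing_pos_eq0 (R : realType) (n : nat) (T : seq 'rV[R]_n) w x :
  (forall t, t \in T -> 0 < pairing w t) -> incone T x -> pairing w x = 0 -> x = 0.
Proof.
elim: T x => [|a T IH] x HT //=.
move=> [c [c0 Hc]] Hw.
have HT' : forall t, t \in T -> 0 < pairing w t.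
  by move=> t tT; apply: HT; rewrite in_cons tT orbT.
have ge1 := pairing_ge0 (fun t tT => ltW (HT' t tT)) Hc.
have ha := HT a (mem_head _ _).
move: Hw; have -> : x = (x - c *: a) + c *: a by rewrite subrK.
rewrite pairingDr pairingZr => Hw.
have cpa : c * pairing w a = 0.
  apply/eqP; rewrite eq_le (mulr_ge0 c0 (ltW ha)) andbT.
  by rewrite -Hw lerDr.
have c00 : c = 0.
  by move/eqP: cpa; rewrite mulf_eq0 (gt_eqF ha) orbF => /eqP.
move: Hw Hc; rewrite cpa addr0 c00 scale0r subr0 addr0 => Hw Hc.
exact: IH.
Qed.
Lemma incone_map (R : realType) (n : nat) (L : seq 'rV[R]_n) (a : 'rV[R]_n)
  (p : 'rV[R]_n -> R) (q : R) x :
  (forall t, t \in L -> 0 <= p t) ->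
  incone (map (fun t => p t *: a + q *: t) L) x ->
  exists y mu, [/\ incone L y, 0 <= mu & x = mu *: a + q *: y].
Proof.
elim: L x => [|t L IH] x HL /=.
  by move=> ->; exists 0, 0; split => //; rewrite !scaler0 scale0r addr0.
move=> [c [c0 Hc]].
have HL' : forall t, t \in L -> 0 <= p t.
  by move=> t' tL; apply: HL; rewrite in_cons tL orbT.
have [y [mu [Hy mu0 Hx]]] := IH _ HL' Hc.
exists (y + c *: t), (mu + c * p t); split.
- by exists c; split => //; rewrite addrK.
- by apply: addr_ge0 => //; apply: mulr_ge0 => //; apply: HL; rewrite mem_head.
- move/eqP: Hx; rewrite subr_eq => /eqP ->.
  rewrite !scalerDr !scalerDl !scalerA.
  by rewrite (mulrC q c) addrACA.
Qed.

Lemma farkas (R : realType) (n : nat) (L : seq 'rV[R]_n) b :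
  incone L b \/ exists u, (forall t, t \in L -> 0 <= pairing u t) /\ pairing u b < 0.
Proof.
move: {2}(size L) (leqnn (size L)) => N; elim: N L b => [|N IH] L b.
  case: L => // _; case: (eqVneq b 0) => [->|nb]; first by left.
  right; exists (- b); split => //.
  rewrite pairingNl oppr_lt0 /pairing.
  have : 0 < \sum_(i < n) b ord0 i ^+ 2.
    rewrite lt_def; apply/andP; split; last by apply: sumr_ge0 => i _; apply: sqr_ge0.
    apply/negP => /eqP /psumr_eq0P H'; have H := H' (fun i _ => sqr_ge0 _); apply/negP: nb; rewrite negbK; apply/eqP/rowP => i.
    have := H i isT; rewrite mxE => /eqP; rewrite sqrf_eq0 => /eqP ->.
    by [].
  by under eq_bigr => i _ do rewrite expr2.
case: L => [|a L] HN; first by apply: IH.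
have HL : (size L <= N)%N by [].
case: (IH L b HL) => [Hb|[u [Hu Hub]]].
  by left; exists 0; split => //; rewrite scale0r subr0.
case: (lerP 0 (pairing u a)) => Hua.
  right; exists u; split => // t; rewrite in_cons => /orP [/eqP ->|]; first by [].
  exact: Hu.
pose L2 := map (fun t => pairing u t *: a + (- pairing u a) *: t) L.
pose b2 := pairing u b *: a + (- pairing u a) *: b.
have HL2 : (size L2 <= N)%N by rewrite size_map.
case: (IH L2 b2 HL2) => [Hb2|[w [Hw Hwb]]].
  have [y [mu [Hy mu0 Hx]]] := incone_map Hu Hb2.
  left; exists ((mu - pairing u b) / (- pairing u a)); split.
    apply: divr_ge0; last by rewrite oppr_ge0 ltW.
    by rewrite subr_ge0 (le_trans (ltW Hub)).
  have qn0 : - pairing u a != 0 by rewrite oppr_eq0 lt_eqF.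
  have -> : b - (mu - pairing u b) / - pairing u a *: a = y.
    apply: (scalerI qn0); rewrite scalerBr scalerA mulrC divfK //.
    have Hy' : - pairing u a *: y = b2 - mu *: a by rewrite Hx addrC addKr.
    rewrite Hy' /b2 scalerBl; set A := pairing u b *: a; set B := - pairing u a *: b.
    by rewrite opprB addrA (addrC B).
  by [].
right; exists (pairing w a *: u - pairing u a *: w); split.
  move=> t; rewrite in_cons => /orP [/eqP ->|tL].
    by rewrite pairingBl !pairingZl mulrC subrr.
  have := Hw (pairing u t *: a + (- pairing u a) *: t) (map_f _ tL).
  rewrite pairingBl !pairingZl pairingDr !pairingZr.
  by rewrite mulrC mulNr.
move: Hwb; rewrite /b2 pairingBl !pairingZl pairingDr !pairingZr.
by rewrite mulrC mulNr.
Qed.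
Lemma irredundant (R : realType) (n : nat) (S : seq 'rV[R]_n) :
  exists L, [/\ (forall x, incone S x <-> incone L x), {subset L <= S} &
    forall s, s \in L -> ~ incone (rem s L) s].
Proof.
move: {2}(size S) (leqnn (size S)) => N; elim: N S => [|N IH] S HS.
  case: S HS => // _; exists [::]; split => //.
case: (classic (exists s, s \in S /\ incone (rem s S) s)) => [[s [sS Hs]]|H].
  have Hsz : (size (rem s S) <= N)%N.
    rewrite size_rem //; case: (size S) HS => //.
  have [L [HL1 HL2 HL3]] := IH _ Hsz.
  exists L; split => //.
  - move=> x; rewrite -HL1; split.
      move/(incone_rem x sS) => [c [c0 Hc]].
      have -> : x = (x - c *: s) + c *: s by rewrite subrK.
      by apply: inconeD => //; apply: inconeZ.
    apply: incone_sub => t /mem_rem tS; exact: incone_mem.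
  - by move=> t /HL2 /mem_rem.
exists S; split => // s sS Hs; apply: H; by exists s.
Qed.

Lemma ray_face (R : realType) (n : nat) (L : seq 'rV[R]_n) s :
  (forall x, incone L x -> incone L (- x) -> x = 0) ->
  (forall s, s \in L -> ~ incone (rem s L) s) ->
  s \in L ->
  exists u, (forall x, incone L x -> 0 <= pairing u x) /\
    (forall x, (incone L x /\ pairing u x = 0) <-> exists c, 0 <= c /\ x = c *: s).
Proof.
move=> Hstr Hirr sL.
have Ht : forall t, t \in rem s L -> exists u,
    [/\ forall t', t' \in rem s L -> 0 <= pairing u t', pairing u s = 0 & 0 < pairing u t].
  move=> t tR.
  case: (farkas [:: s, - s & rem s L] (- t)) => [[al [al0 [be [be0 Hy]]]]|[u [Hu Hut]]].
    exfalso.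
    pose y := - t - al *: s - be *: - s.
    change (incone (rem s L) y) in Hy.
    have yL : incone L y by apply: incone_sub Hy => t' /mem_rem t'L; apply: incone_mem.
    have sK : incone L s by apply: incone_mem.
    have tK : incone L t by apply: incone_mem; apply: mem_rem tR.
    case: (lerP (be - al) 0) => hg.
      have ht : t = 0.
        apply: Hstr => //.
        have -> : - t = y + (al - be) *: s.
          by rewrite /y; apply/rowP => i; rewrite !mxE; ring.
        apply: inconeD => //; apply: inconeZ => //; lra.
      have : 0 \in L by rewrite -ht; apply: mem_rem tR.
      move=> zL; apply: (Hirr 0 zL); exact: incone0.
    apply: (Hirr s sL).
    have Hs : s = (be - al)^-1 *: (t + y).
      have hne : be - al != 0 by rewrite gt_eqF.
      rewrite /y; apply/rowP => i; rewrite !mxE; field.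
      by [].
    rewrite [X in incone _ X]Hs.
    apply: inconeZ; first by rewrite invr_ge0; apply: ltW.
    apply: inconeD; [exact: (incone_mem tR)|exact: Hy].
  exists u; split.
  - by move=> t' t'R; apply: Hu; rewrite !in_cons t'R !orbT.
  - apply/eqP; rewrite eq_le; apply/andP; split.
      by rewrite -oppr_ge0 -pairingNr; apply: Hu; rewrite !in_cons eqxx orbT.
    by apply: Hu; rewrite mem_head.
  - by move: Hut; rewrite pairingNr oppr_lt0.
have Hall : forall T : seq 'rV[R]_n, {subset T <= rem s L} -> exists u,
    [/\ forall t', t' \in rem s L -> 0 <= pairing u t', pairing u s = 0 &
        forall t, t \in T -> 0 < pairing u t].
  elim => [|t T IH] HT.
    by exists 0; split => // [t' _|]; rewrite pairing0l.
  have [u1 [Hu1 Hu1s Hu1t]] := Ht t (HT t (mem_head _ _)).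
  have [u2 [Hu2 Hu2s Hu2t]] := IH (fun x xT => HT x ltac:(by rewrite in_cons xT orbT)).
  exists (u1 + u2); split.
  - by move=> t' t'R; rewrite pairingDl; apply: addr_ge0; [apply: Hu1|apply: Hu2].
  - by rewrite pairingDl Hu1s Hu2s addr0.
  - move=> t'; rewrite in_cons => /orP [/eqP ->|t'T]; rewrite pairingDl.
      by apply: ltr_wpDr => //; apply: Hu2; apply: HT; rewrite mem_head.
    by apply: ltr_wpDl; [apply: Hu1; apply: HT; rewrite in_cons t'T orbT| apply: Hu2t].
have [u [Hu Hus Hut]] := Hall (rem s L) (fun x h => h).
exists u; split.
  move=> x /(incone_rem x sL) [c [c0 Hc]].
  have -> : x = (x - c *: s) + c *: s by rewrite subrK.
  rewrite pairingDr pairingZr Hus mulr0 addr0; exact: pairing_ge0 Hc.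
move=> x; split.
  move=> [/(incone_rem x sL) [c [c0 Hc]] Hx]; exists c; split => //.
  apply/eqP; rewrite -subr_eq0; apply/eqP; apply: (pairing_pos_eq0 Hut Hc).
  by rewrite pairingBr Hx pairingZr Hus mulr0 subr0.
move=> [c [c0 ->]]; split.
  by apply: inconeZ => //; apply: incone_mem.
by rewrite pairingZr Hus mulr0.
Qed.
Lemma latticeP (R : realType) (n : nat) (x : 'rV[R]_n) :
  lattice x <-> [forall i, x ord0 i \is a Num.int].
Proof. by split => [H|/forallP H]; [apply/forallP|]. Qed.

Lemma latticeD (R : realType) (n : nat) (x y : 'rV[R]_n) :
  lattice x -> lattice y -> lattice (x + y).
Proof. by move=> Hx Hy i; rewrite mxE; apply: rpredD. Qed.

Lemma latticeB (R : realType) (n : nat) (x y : 'rV[R]_n) :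
  lattice x -> lattice y -> lattice (x - y).
Proof. by move=> Hx Hy i; rewrite mxE [(- y) _ _]mxE; apply: rpredB. Qed.

Lemma latticeZn (R : realType) (n : nat) (N : nat) (x : 'rV[R]_n) :
  lattice x -> lattice (N%:R *: x).
Proof. by move=> Hx i; rewrite mxE; apply: rpredM => //; apply: natr_int. Qed.

Lemma pairing_int (R : realType) (n : nat) (x y : 'rV[R]_n) :
  lattice x -> lattice y -> pairing x y \is a Num.int.
Proof. by move=> Hx Hy; rewrite /pairing; apply: rpred_sum => i _; apply: rpredM. Qed.

Lemma row_rV (R : realType) (n : nat) (s : 'rV[R]_n) (i : 'I_1) : row i s = s.
Proof. by apply/rowP => j; rewrite mxE ord1. Qed.

Lemma ray_span (R : realType) (n : nat) (K : 'rV[R]_n -> Prop) (s : 'rV[R]_n) :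
  s != 0 -> (forall x, K x <-> exists c, 0 <= c /\ x = c *: s) -> span_dim K 1.
Proof.
move=> ns HK; split.
  exists s; split; last by rewrite /row_free rank_rV ns.
  by move=> i; rewrite row_rV; apply/HK; exists 1; rewrite scale1r.
move=> A HA.
have [c0 [_ H0]] := proj1 (HK _) (HA ord0).
have [c1 [_ H1]] := proj1 (HK _) (HA ord_max).
have -> : A = (\col_(i < 2) (if i == ord0 then c0 else c1)) *m s.
  apply/matrixP => i j; rewrite !mxE big_ord1 !mxE.
  case: (eqVneq i ord0) => [->|ne].
    by have := congr1 (fun M : 'rV_n => M ord0 j) H0; rewrite !mxE.
  have -> : i = ord_max by apply/val_inj; case: i ne => [[|[|]]] //= *; rewrite eqE.
  by have := congr1 (fun M : 'rV_n => M ord0 j) H1; rewrite !mxE.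
rewrite /row_free; apply/negP => /eqP H.
have := mxrankM_maxr (\col_(i < 2) (if i == ord0 then c0 else c1)) s.
by rewrite H rank_rV; case: (s != 0).
Qed.
Lemma prim_exists (R : realType) (n : nat) (K : 'rV[R]_n -> Prop) (s : 'rV[R]_n) :
  s != 0 -> lattice s -> (forall x, K x <-> exists c, 0 <= c /\ x = c *: s) ->
  exists rho, primitive_gen K rho /\ exists N : nat, s = N%:R *: rho.
Proof.
move=> ns ls HK.
have [i0 si0] : exists i0, s ord0 i0 != 0.
  apply/not_all_not_ex => H; apply/negP: ns; rewrite negbK; apply/eqP/rowP => j.
  by rewrite mxE; have := H j; case: eqP.
have /natrP [N0 HN0] : `|s ord0 i0| \is a Num.nat by apply: natr_norm_int.
set a := `|s ord0 i0| in HN0.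
have a0 : 0 < a by rewrite normr_gt0.
have N0p : (0 < N0)%N by move: a0; rewrite HN0 ltr0n.
pose P k := (0 < k)%N && [forall i, ((k%:R / a) *: s) ord0 i \is a Num.int].
have exP : exists k, P k.
  exists N0; rewrite /P N0p /= -HN0 divff ?gt_eqF // scale1r; exact/latticeP.
case: (ex_minnP exP) => k0 /andP [k0p Hk0] Hmin.
pose rho := (k0%:R / a) *: s.
have lrho : lattice rho by apply/latticeP.
have Krho : K rho by apply/HK; exists (k0%:R / a); split => //; apply: divr_ge0 => //; apply: ltW.
have Hprim : forall x, K x -> lattice x -> exists k : nat, x = k%:R *: rho.
  move=> x /HK [c [c0 ->]] lx.
  have /natrP [q Hq] : c * a \is a Num.nat.
    rewrite /a -[c]ger0_norm // -normrM natr_norm_int //.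
    by have := lx i0; rewrite mxE.
  have hc : c = q%:R / a by rewrite -Hq mulfK ?gt_eqF.
  have hq := div.divn_eq q k0.
  set d := (q %/ k0)%N in hq; set r := (q %% k0)%N in hq.
  have hr : r = 0%N.
    case: (posnP r) => // rp; exfalso.
    have Pr : P r.
      rewrite /P rp /=; apply/latticeP.
      have -> : (r%:R / a) *: s = c *: s - d%:R *: rho.
        rewrite hc /rho scalerA -scalerBl; congr (_ *: _).
        rewrite hq natrD natrM; field; by rewrite gt_eqF.
      by apply: latticeB => //; exact: latticeZn.
    have := Hmin r Pr; rewrite leqNgt; move/negP; apply.
    by rewrite /r ltn_pmod.
  exists d; rewrite hc /rho scalerA mulrA -natrM.
  by move: hq; rewrite hr addn0 => <-.
have nrho : rho != 0.
  rewrite /rho scaler_eq0 negb_or ns andbT mulf_neq0 // ?pnatr_eq0 -?lt0n //.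
  by rewrite invr_eq0 gt_eqF.
exists rho; split; first by split.
apply: Hprim => //; apply/HK; exists 1; rewrite scale1r; split => //.
Qed.
Lemma cone_genE (R : realType) (n : nat) (S : seq 'rV[R]_n) x :
  cone_gen S x <-> incone S x.
Proof.
elim: S x => [|a S IH] x.
  split; first by move=> [c [_ ->]]; rewrite big_ord0.
  by move=> /= ->; exists (fun _ => 0); split => //; rewrite big_ord0.
split.
  move=> [c [c0 ->]]; rewrite big_ord_recl /=; exists (c ord0); split => //.
  apply/IH; exists (fun j => c (lift ord0 j)); split => //.
  by rewrite addrAC subrr add0r; apply: eq_bigr => j _; rewrite add0n.
move=> /= [c0 [c00 /IH [c [cp Hc]]]].
exists (fun j => if unlift ord0 j is Some j' then c j' else c0); split.
  by move=> j; case: (unlift ord0 j).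
rewrite big_ord_recl unlift_none /=.
under eq_bigr => j _ do rewrite liftK /= add0n.
by rewrite -Hc addrC subrK.
Qed.

Fixpoint inconeP (R : realType) (n : nat) (L : seq 'rV[R]_n) (x : 'rV[R]_n) : Prop :=
  match L with
  | [::] => x = 0
  | a :: L' => exists c : R, 0 < c /\ inconeP L' (x - c *: a)
  end.

Lemma inconeP_incone (R : realType) (n : nat) (L : seq 'rV[R]_n) x :
  inconeP L x -> incone L x.
Proof.
elim: L x => [|a L IH] x //= [c [c0 Hc]]; exists c; split; [exact: ltW|exact: IH].
Qed.

Lemma incone_pos (R : realType) (n : nat) (L : seq 'rV[R]_n) x :
  incone L x -> exists T, {subset T <= L} /\ inconeP T x.
Proof.
elim: L x => [|a L IH] x /=; first by move=> ->; exists [::].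
move=> [c [c0 /IH [T [HT HTx]]]].
case: (lerP c 0) => hc.
  have c00 : c = 0 by apply/eqP; rewrite eq_le hc c0.
  exists T; split; first by move=> t tT; rewrite in_cons HT ?orbT.
  by move: HTx; rewrite c00 scale0r subr0.
exists (a :: T); split; last by exists c.
by move=> t; rewrite !in_cons => /orP [->|/HT ->]; rewrite ?orbT.
Qed.

Lemma inconeP_zero (R : realType) (n : nat) (T : seq 'rV[R]_n) w x :
  (forall t, t \in T -> 0 <= pairing w t) -> inconeP T x -> pairing w x = 0 ->
  forall t, t \in T -> pairing w t = 0.
Proof.
elim: T x => [|a T IH] x HT //= [c [c0 Hc]] Hw.
have HT' : forall t, t \in T -> 0 <= pairing w t.
  by move=> t tT; apply: HT; rewrite in_cons tT orbT.
have ge1 := pairing_ge0 HT' (inconeP_incone Hc).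
have ha := HT a (mem_head _ _).
move: Hw; have -> : x = (x - c *: a) + c *: a by rewrite subrK.
rewrite pairingDr pairingZr => Hw.
have cpa : c * pairing w a = 0.
  apply/eqP; rewrite eq_le (mulr_ge0 (ltW c0) ha) andbT.
  by rewrite -Hw lerDr.
have pa0 : pairing w a = 0.
  by move/eqP: cpa; rewrite mulf_eq0 (gt_eqF c0) /= => /eqP.
move=> t; rewrite in_cons => /orP [/eqP ->//|tT].
apply: (IH _ HT' Hc) => //; by move: Hw; rewrite cpa addr0.
Qed.

Lemma to_rays (R : realType) (n : nat) (P : 'rV[R]_n -> Prop) (L : seq 'rV[R]_n) x :
  (forall s, s \in L -> exists t, P t /\ exists c, 0 <= c /\ s = c *: t) ->
  incone L x -> exists T, (forall t, t \in T -> P t) /\ incone T x.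
Proof.
elim: L x => [|a L IH] x HL /=; first by move=> ->; exists [::].
move=> [c [c0 Hc]].
have [t [Pt [d [d0 Ha]]]] := HL a (mem_head _ _).
have [T [HT HTx]] := IH _ (fun s sL => HL s ltac:(by rewrite in_cons sL orbT)) Hc.
move: HTx; rewrite Ha => HTx.
exists (t :: T); split.
  by move=> t'; rewrite in_cons => /orP [/eqP ->|/HT].
by exists (c * d); split; [exact: mulr_ge0|rewrite -scalerA].
Qed.
Lemma comb (R : realType) (n k : nat) (lab : 'rV[R]_n -> 'I_k.+1)
  (v : 'I_k -> 'rV[R]_n) (w : 'rV[R]_n) (T : seq 'rV[R]_n) (r : 'rV[R]_n) :
  (forall t, t \in T -> lattice t) ->
  (forall t, t \in T -> pairing w t = if lab t == ord_max then 1 else 0) ->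
  (forall (i : 'I_k) t, t \in T ->
     [/\ (nat_of_ord (lab t) = nat_of_ord i -> pairing (v i) t = -1),
         ((i < lab t)%N -> 0 <= pairing (v i) t) &
         ((lab t < i)%N -> pairing (v i) t = 0)]) ->
  (forall i, lattice (v i)) ->
  inconeP T r -> r != 0 -> (forall i, pairing (v i) r = 0) ->
  exists p, [/\ incone T p, lattice p, pairing w p = 1 & forall i, pairing (v i) p = 0].
Proof.
move=> HTl HTw HTv Hvl HrT nr Hvr.
have [b [bT lb]] : exists b, b \in T /\ lab b = ord_max.
  apply/not_all_not_ex => H0.
  have Hd : forall d, (d <= k)%N -> forall t, t \in T -> (lab t < k - d)%N.
    elim => [|d IHd] hd t tT.
      rewrite subn0; have := ltn_ord (lab t); rewrite ltnS leq_eqVlt => /orP [/eqP e|//].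
      exfalso; apply: (H0 t); split => //; apply/val_inj => /=; exact: e.
    have hj : (k - d.+1 < k)%N by lia.
    pose j := Ordinal hj.
    have Hle : forall t, t \in T -> 0 <= pairing (- v j) t.
      move=> t' t'T; rewrite pairingNl oppr_ge0.
      have := IHd (ltnW hd) t' t'T => hlt.
      have [h1 h2 h3] := HTv j t' t'T.
      case: (ltngtP (lab t') j) => h.
      - by rewrite h3.
      - exfalso; move: h hlt => /=; lia.
      - by rewrite h1 // lerN10.
    have Hz := inconeP_zero Hle HrT ltac:(by rewrite pairingNl Hvr oppr0).
    have := IHd (ltnW hd) t tT => hlt.
    have [h1 _ _] := HTv j t tT.
    case: (eqVneq (nat_of_ord (lab t)) (k - d.+1)%N) => e.
      have := Hz t tT; rewrite pairingNl h1 // opprK => /eqP; rewrite oner_eq0 //.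
    by move: e hlt; lia.
  have Tnil : T = [::].
    case: T HTl HTw HTv HrT Hd {H0} => // t T' _ _ _ _ Hd.
    by have := Hd k (leqnn _) t (mem_head _ _); rewrite subnn.
  by move: HrT; rewrite Tnil /= => /eqP; rewrite (negbTE nr).
have HC : forall d, (d <= k)%N -> exists p,
    [/\ incone [seq t <- T | (k - d <= lab t)%N] p, lattice p, pairing w p = 1 &
        forall i : 'I_k, (k - d <= i)%N -> pairing (v i) p = 0].
  elim => [|d IHd] hd.
    exists b; split.
    - by apply: incone_mem; rewrite mem_filter lb /= subn0 leqnn.
    - exact: HTl.
    - by rewrite HTw // lb eqxx.
    - by move=> i; rewrite subn0 leqNgt ltn_ord.
  have [p [Hp lp wp vp]] := IHd (ltnW hd).
  have hj : (k - d.+1 < k)%N by lia.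
  pose j := Ordinal hj.
  have Hsub : forall x, incone [seq t <- T | (k - d <= lab t)%N] x ->
                        incone [seq t <- T | (k - d.+1 <= lab t)%N] x.
    move=> x; apply: incone_sub => t; rewrite mem_filter => /andP [h tT].
    by apply: incone_mem; rewrite mem_filter tT andbT; move: h; lia.
  have N0 : 0 <= pairing (v j) p.
    apply: pairing_ge0 Hp => t; rewrite mem_filter => /andP [h tT].
    have [_ h2 _] := HTv j t tT; apply: h2 => /=; move: h; lia.
  have /natrP [m Hm] : pairing (v j) p \is a Num.nat.
    by rewrite natrEint N0 andbT; apply: pairing_int.
  case: (posnP m) => [m0|mp].
    exists p; split => //; first exact: Hsub.
    move=> i hi; case: (eqVneq (nat_of_ord i) (k - d.+1)%N) => e.
      have -> : i = j by apply/val_inj.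
      by rewrite Hm m0.
    by apply: vp; move: hi e; lia.
  have [a [aT la]] : exists a, a \in T /\ nat_of_ord (lab a) = (k - d.+1)%N.
    apply/not_all_not_ex => H0.
    have Hle : forall t, t \in T -> 0 <= pairing (v j) t.
      move=> t tT; have [h1 h2 h3] := HTv j t tT.
      case: (ltngtP (lab t) j) => h.
      - by rewrite h3.
      - exact: h2.
      - by exfalso; apply: (H0 t); split.
    have Hz := inconeP_zero Hle HrT (Hvr j).
    have : pairing (v j) p = 0.
      apply: (pairing_eq0 _ (incone_sub _ Hp)); first exact: Hz.
      by move=> t; rewrite mem_filter => /andP [_ tT]; apply: incone_mem.
    by rewrite Hm => /eqP; rewrite pnatr_eq0 => /eqP m00; move: mp; rewrite m00.
  exists (p + m%:R *: a); split.
  - apply: inconeD; first exact: Hsub.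
    apply: inconeZ => //; apply: incone_mem; rewrite mem_filter aT la leqnn //.
  - by apply: latticeD => //; apply: latticeZn; apply: HTl.
  - rewrite pairingDr pairingZr wp HTw //.
    have -> : (lab a == ord_max) = false.
      apply/negP => /eqP e; move: la; rewrite e /=; lia.
    by rewrite mulr0 addr0.
  - move=> i hi; rewrite pairingDr pairingZr.
    have [h1 h2 h3] := HTv i a aT.
    case: (eqVneq (nat_of_ord i) (k - d.+1)%N) => e.
      have ij : i = j by apply/val_inj.
      rewrite h1 ?la ?e // ij Hm mulrN1 subrr //.
    by rewrite vp ?h3 ?mulr0 ?addr0 // ?la; move: hi e; lia.
have [p [Hp lp wp vp]] := HC k (leqnn _).
exists p; split => //.
  apply: incone_sub Hp => t; rewrite mem_filter => /andP [_ tT]; exact: incone_mem.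
by move=> i; apply: vp; rewrite subnn.
Qed.
Theorem proposition2p12 (R : realType) (n m k : nat)
  (Sigma : 'I_m -> 'rV[R]_n -> Prop) (lab : 'rV[R]_n -> 'I_k.+1)
  (phi : 'I_k.+1 -> 'rV[R]_n -> R) (u : 'I_k.+1 -> 'I_m -> 'rV[R]_n)
  (v : 'I_k -> 'rV[R]_n) (C : 'I_m) :
  complete_fan Sigma ->
  Qnef_partition Sigma lab phi u ->
  amenable Sigma lab v ->
  span_dim (fun x => Sigma C x /\ M_V v x) 1 ->
  (forall (C' : 'I_m), span_dim (fun x => Sigma C' x /\ M_V v x) 1 ->
     (forall x, Sigma C' x -> Sigma C x) -> forall x, Sigma C x -> Sigma C' x) ->
  exists rho : 'rV[R]_n,
    [/\ Sigma C rho, M_V v rho, lattice rho & phi ord_max rho = 1].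
Proof.
move=> [[H1 H2 H3] _] [Q1 Q2 Q3 Q4 Q5] [Hvl Hv] [[A [HA Hfree]] _] _.
have [Crc Hstr] := H1 C.
have [Sg [HSl HSg]] := Crc.
have [L [HL1 HL2 HL3]] := irredundant Sg.
have HCL : forall x, Sigma C x <-> incone L x.
  by move=> x; rewrite HSg cone_genE HL1.
pose r := row ord0 A.
have [Cr Vr] := HA ord0.
have nr : r != 0.
  apply/negP => /eqP r0; move: Hfree; rewrite /row_free.
  have -> : A = 0.
    apply/matrixP => i j; rewrite ord1.
    by have := congr1 (fun M : 'rV_n => M ord0 j) r0; rewrite /r !mxE.
  by rewrite mxrank0.
have HstrL : forall x, incone L x -> incone L (- x) -> x = 0.
  by move=> x /HCL h1 /HCL h2; apply: Hstr.
have Hrays : forall s, s \in L -> exists t, (is_ray Sigma t /\ Sigma C t) /\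
                                  exists c, 0 <= c /\ s = c *: t.
  move=> s sL.
  have [uu [Hu1 Hu2]] := ray_face HstrL HL3 sL.
  have Hface : face (fun x => Sigma C x /\ pairing uu x = 0) (Sigma C).
    by exists uu; split => // x /HCL; apply: Hu1.
  have [j Hj] := H2 C _ Hface.
  have HK : forall x, Sigma j x <-> exists c, 0 <= c /\ x = c *: s.
    move=> x; rewrite Hj -Hu2; split => [[/HCL h1 h2]|[/HCL h1 h2]]; by split.
  have ns : s != 0.
    apply/negP => /eqP s0; apply: (HL3 s sL); rewrite s0; exact: incone0.
  have ls : lattice s by apply: HSl; apply: HL2.
  have [rho [Hrho [N HN]]] := prim_exists ns ls HK.
  exists rho; split.
    split; first by exists j; split => //; exact: ray_span ns HK.
    by case: Hrho => Kr _ _ _; have := proj1 (Hj rho) Kr => [[]].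
  by exists N%:R; split => //; apply: ler0n.
have [T [HT HTr]] := to_rays Hrays (proj1 (HCL r) Cr).
have [T' [HT' HT'r]] := incone_pos HTr.
have [w Hw] := Q4 ord_max C.
have HTC : forall t, t \in T' -> is_ray Sigma t /\ Sigma C t by move=> t /HT' /HT.
have [p [Hp lp wp vp]] : exists p, [/\ incone T' p, lattice p, pairing w p = 1 &
                                       forall i, pairing (v i) p = 0].
  apply: (comb (lab := lab)) HT'r nr Vr.
  - by move=> t /HTC [[j [_ [_ lt _ _]]] _].
  - by move=> t /HTC [rt Ct]; rewrite -Hw // Q5.
  - by move=> i t /HTC [rt _]; apply: Hv.
  - exact: Hvl.
have Cp : Sigma C p.
  apply/HCL; apply: incone_sub Hp => t /HTC [_ /HCL //].
exists p; split => //.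
by rewrite Hw.
Qed.
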